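(* Fix $\epsilon>0$, $\delta>0$ and an integer $L\geq 2$ such that $2\epsilon<\delta\leq 1/L$. Then the minimum number of queries $N^*(\epsilon,\delta,L)$ of an $(\epsilon,\delta,L)$-private learner strategy satisfies \[ \max\Big\{\log\frac{1}{\epsilon},\ \log\frac{\delta}{\epsilon}+2L-4\Big\}\ \leq\ N^*(\epsilon,\delta,L)\ \leq\ \log\frac{1}{L\epsilon}+2L . \]
   Context: Private sequential learning model. An unknown true value $v^*\in[0,1)$. A learner submits queries $q_k\in[0,1)$ and receives responses $r_k=\mathbb{I}(v^*\geq q_k)$. A learner strategy $\phi$ of length $N$ uses a random seed $Y$ uniformly distributed on $\{1,2,\dots,\mathcal{Y}\}$ (for a large integer $\mathcal{Y}$) and consists of query functions $\phi_1,\dots,\phi_N$ and an estimation function $\phi^E$: $q_1=\phi_1(Y)$, $q_k=\phi_k(r_1,\dots,r_{k-1},Y)$ for $k=2,\dots,N$, and the estimate is $\hat x=\phi^E(r_1,\dots,r_N,Y)\in[0,1)$; queries within a run are distinct. $\Phi_N$ denotes the set of all such strategies of length $N$. Write $\hat x(x,y)$ for the estimate when $v^*=x$, $Y=y$. For $x\in[0,1)$, let $\mathcal{Q}(x)=\{\overline q\in[0,1)^N:\mathbb{P}(Q_x=\overline q)>0\}$, where $Q_x$ is the (random, through $Y$) query sequence when $v^*=x$. The adversary's information set for $\overline q$ is $\mathcal{I}(\overline q)=\{x\in[0,1):\overline q\in\mathcal{Q}(x)\}$. A set $\mathcal{E}\subset\mathbb{R}$ is $(\delta,L)$-coverable if it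 is contained in a union of $L$ closed intervals each of length at most $\delta$; its $\delta$-cover number $C_\delta(\mathcal{E})$ is the least $L\in\mathbb{N}$ such that $\mathcal{E}$ is $(\delta,L)$-coverable. A strategy $\phi\in\Phi_N$ is $(\epsilon,\delta,L)$-private (for $L\geq2$ integer) if (1) $\mathbb{P}(|\hat x(x,Y)-x|\leq\epsilon/2)=1$ for all $x\in[0,1)$, and (2) $C_\delta(\mathcal{I}(\overline q))\geq L$ for every $x\in[0,1)$ and every $\overline q\in\mathcal{Q}(x)$. $N^*(\epsilon,\delta,L)=\min\{N\in\mathbb{N}:\Phi_N\text{ contains an }(\epsilon,\delta,L)\text{-private strategy}\}$. All logarithms are base 2, and non-integer quantities in the bounds are understood rounded up to the nearest integer (e.g., $\lceil\log(1/(L\epsilon))\rceil$). *)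

(* Defs.v *)
From Stdlib Require Import Reals Lra Lia List ClassicalEpsilon ClassicalDescription.
Import ListNotations.
Open Scope R_scope.

Definition log2 (x : R) : R := ln x / ln 2.
(* up y is the unique integer z with y < z <= y + 1, so  -(up(-x) - 1) = ceil x *)
Definition Rceil (x : R) : Z := (- (up (- x) - 1))%Z.

Definition resp (v : R) (q : R) : bool := if Rle_dec q v then true else false.

(** The random seed Y is uniform on
    {1, ..., nseeds}; query k (0-indexed, k < N) is [qf k h y], where h is
    the list of the k previous responses r_1..r_k and y the seed; the
    estimate is [est h y] with h the list of all N responses. *)
Record strategy (N : nat) := Strategy {
  nseeds : nat;
  nseeds_pos : (0 < nseeds)%nat;
  qf : nat -> list bool -> nat -> R;
  est : list bool -> nat -> R;
  qf_range : forall k h y, 0 <= qf k h y < 1;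
  est_range : forall h y, 0 <= est h y < 1
}.
Arguments nseeds {N}.
Arguments qf {N}.
Arguments est {N}.

Fixpoint hist {N} (s : strategy N) (x : R) (y : nat) (k : nat) : list bool :=
  match k with
  | O => []
  | S k' => let h := hist s x y k' in h ++ [resp x (qf s k' h y)]
  end.

Definition queries {N} (s : strategy N) (x : R) (y : nat) : list R :=
  map (fun k => qf s k (hist s x y k) y) (seq 0 N).
Definition xhat {N} (s : strategy N) (x : R) (y : nat) : R :=
  est s (hist s x y N) y.

Definition distinct_queries {N} (s : strategy N) : Prop :=
  forall x y, 0 <= x < 1 -> (1 <= y <= nseeds s)%nat -> NoDup (queries s x y).

Definition seed_prob {N} (s : strategy N) (S : nat -> Prop) : R :=
  INR (length (filter (fun y => if excluded_middle_informative (S y) then true else false)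
                      (seq 1 (nseeds s)))) / INR (nseeds s).

Definition Qset {N} (s : strategy N) (x : R) (qs : list R) : Prop :=
  seed_prob s (fun y => queries s x y = qs) > 0.

Definition info_set {N} (s : strategy N) (qs : list R) (x : R) : Prop :=
  0 <= x < 1 /\ Qset s x qs.

Definition coverable (E : R -> Prop) (delta : R) (L : nat) : Prop :=
  exists a b : nat -> R,
    (forall i, (i < L)%nat -> a i <= b i /\ b i - a i <= delta) /\
    (forall x, E x -> exists i, (i < L)%nat /\ a i <= x <= b i).

Definition cover_number (E : R -> Prop) (delta : R) : nat :=
  epsilon (inhabits 0%nat)
    (fun L => coverable E delta L /\ forall L', coverable E delta L' -> (L <= L')%nat).

Definition is_private {N} (s : strategy N) (eps delta : R) (L : nat) : Prop :=
  distinct_queries s /\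
  (forall x, 0 <= x < 1 -> seed_prob s (fun y => Rabs (xhat s x y - x) <= eps / 2) = 1) /\
  (forall x qs, 0 <= x < 1 -> Qset s x qs -> (L <= cover_number (info_set s qs) delta)%nat).

Definition Nstar (eps delta : R) (L : nat) : nat :=
  epsilon (inhabits 0%nat)
    (fun N => (exists s : strategy N, is_private s eps delta L) /\
              forall N', (exists s : strategy N', is_private s eps delta L) -> (N <= N')%nat).

(* Main.v *)
Require Import Defs.
From Stdlib Require Import Reals Lra Lia List ClassicalEpsilon ClassicalDescription Classical Wf_nat ZArith.
Import ListNotations.
Open Scope R_scope.

Lemma filter_length_lt {A} (f : A -> bool) (l : list A) x :
  In x l -> f x = false -> (length (filter f l) < length l)%nat.
Proof.
  induction l as [|a l IH]; simpl; [tauto|].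
  intros [<-|H] Hf.
  - rewrite Hf. pose proof (filter_length_le f l) as Hl. lia.
  - destruct (f a); simpl; specialize (IH H Hf); lia.
Qed.

Lemma filter_all {A} (f : A -> bool) (l : list A) :
  (forall x, In x l -> f x = true) -> filter f l = l.
Proof.
  induction l as [|a l IH]; simpl; intros H; auto.
  rewrite H by auto. f_equal. apply IH. auto.
Qed.

Lemma seed_prob_one {N} (s : strategy N) (S : nat -> Prop) :
  (forall y, (1 <= y <= nseeds s)%nat -> S y) -> seed_prob s S = 1.
Proof.
  intros H. unfold seed_prob.
  rewrite filter_all.
  - rewrite length_seq. pose proof (nseeds_pos _ s).
    field. apply not_0_INR. lia.
  - intros y Hy. apply in_seq in Hy.
    destruct (excluded_middle_informative (S y)); auto.
    exfalso. apply n. apply H. lia.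
Qed.

Lemma seed_prob_one_inv {N} (s : strategy N) (S : nat -> Prop) :
  seed_prob s S = 1 -> forall y, (1 <= y <= nseeds s)%nat -> S y.
Proof.
  intros H y Hy. apply NNPP. intros HS.
  unfold seed_prob in H.
  pose proof (nseeds_pos _ s) as Hp.
  assert (Hlt : (length (filter (fun y => if excluded_middle_informative (S y) then true else false)
                      (seq 1 (nseeds s))) < nseeds s)%nat).
  { rewrite <- (length_seq (nseeds s) 1) at 2.
    apply filter_length_lt with y.
    - apply in_seq. lia.
    - destruct (excluded_middle_informative (S y)); tauto. }
  apply lt_INR in Hlt.
  assert (0 < INR (nseeds s)) by (apply lt_0_INR; lia).
  apply (Rmult_eq_compat_r (INR (nseeds s))) in H.
  unfold Rdiv in H. rewrite Rmult_assoc, Rinv_l in H by lra. lra.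
Qed.

Lemma seed_prob_pos {N} (s : strategy N) (S : nat -> Prop) y :
  (1 <= y <= nseeds s)%nat -> S y -> seed_prob s S > 0.
Proof.
  intros Hy HS. unfold seed_prob.
  pose proof (nseeds_pos _ s) as Hp.
  apply Rdiv_lt_0_compat; [|apply lt_0_INR; lia].
  apply lt_0_INR.
  destruct (filter _ _) eqn:E; simpl; [|lia].
  assert (In y (filter (fun y => if excluded_middle_informative (S y) then true else false)
                      (seq 1 (nseeds s)))).
  { apply filter_In. split. apply in_seq; lia.
    destruct (excluded_middle_informative (S y)); tauto. }
  rewrite E in H; destruct H.
Qed.

Lemma seed_prob_pos_inv {N} (s : strategy N) (S : nat -> Prop) :
  seed_prob s S > 0 -> exists y, (1 <= y <= nseeds s)%nat /\ S y.
Proof.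
  intros H. unfold seed_prob in H.
  destruct (filter _ _) as [|y l] eqn:E.
  - simpl in H. unfold Rdiv in H. rewrite Rmult_0_l in H. lra.
  - assert (Hin : In y (y :: l)) by (left; auto). rewrite <- E in Hin.
    apply filter_In in Hin. destruct Hin as [H1 H2].
    apply in_seq in H1. exists y. split; [lia|].
    destruct (excluded_middle_informative (S y)); auto; discriminate.
Qed.

Lemma least_exists (P : nat -> Prop) :
  (exists n, P n) -> exists n, P n /\ forall m, P m -> (n <= m)%nat.
Proof.
  intros [n Hn].
  revert Hn. induction n as [n IH] using lt_wf_ind. intros Hn.
  destruct (classic (exists m, (m < n)%nat /\ P m)) as [[m [Hm Pm]]|Hno].
  - exact (IH m Hm Pm).
  - exists n. split; auto. intros m Pm. destruct (Nat.lt_ge_cases m n); auto.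
    exfalso. apply Hno. eauto.
Qed.

Lemma cover_number_spec (E : R -> Prop) d n :
  coverable E d n ->
  coverable E d (cover_number E d) /\
  forall L', coverable E d L' -> (cover_number E d <= L')%nat.
Proof.
  intros H. unfold cover_number. apply epsilon_spec.
  apply least_exists. eauto.
Qed.

Lemma coverable_mono E d n n' : 0 <= d -> coverable E d n -> (n <= n')%nat -> coverable E d n'.
Proof.
  intros Hd [a [b [H1 H2]]] Hn.
  exists (fun i => if Nat.ltb i n then a i else 0), (fun i => if Nat.ltb i n then b i else 0).
  split.
  - intros i Hi. destruct (Nat.ltb_spec i n); auto. lra.
  - intros x Ex. destruct (H2 x Ex) as [i [Hi Hx]]. exists i. split; [lia|].
    destruct (Nat.ltb_spec i n); [auto|lia].
Qed.

Lemma coverable_sub (E E' : R -> Prop) d n :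
  (forall x, E x -> E' x) -> coverable E' d n -> coverable E d n.
Proof.
  intros HS [a [b [H1 H2]]]. exists a, b. split; auto.
Qed.

Lemma coverable_union (E1 E2 : R -> Prop) d n1 n2 :
  coverable E1 d n1 -> coverable E2 d n2 -> coverable (fun x => E1 x \/ E2 x) d (n1 + n2).
Proof.
  intros [a1 [b1 [H1 H2]]] [a2 [b2 [H3 H4]]].
  exists (fun i => if Nat.ltb i n1 then a1 i else a2 (i - n1)%nat),
         (fun i => if Nat.ltb i n1 then b1 i else b2 (i - n1)%nat).
  split.
  - intros i Hi. destruct (Nat.ltb_spec i n1); auto. apply H3. lia.
  - intros x [Ex|Ex].
    + destruct (H2 x Ex) as [i [Hi Hx]]. exists i. split; [lia|].
      destruct (Nat.ltb_spec i n1); [auto|lia].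
    + destruct (H4 x Ex) as [i [Hi Hx]]. exists (n1 + i)%nat. split; [lia|].
      destruct (Nat.ltb_spec (n1 + i) n1); [lia|]. replace (n1 + i - n1)%nat with i by lia. auto.
Qed.

Lemma coverable_one (E : R -> Prop) d lo hi :
  hi - lo <= d -> lo <= hi -> (forall x, E x -> lo <= x <= hi) -> coverable E d 1.
Proof.
  intros Hd Hl H. exists (fun _ => lo), (fun _ => hi). split.
  - intros; split; lra.
  - intros x Ex. exists 0%nat. split; [lia|]. auto.
Qed.

Lemma coverable_zero (E : R -> Prop) d : (forall x, ~ E x) -> coverable E d 0.
Proof.
  intros H. exists (fun _ => 0), (fun _ => 0). split; [intros; lia|].
  intros x Ex. exfalso. exact (H x Ex).
Qed.

Lemma pigeon_fun (f : nat -> nat) n m :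
  (forall j, (j < n)%nat -> (f j < m)%nat) ->
  (forall j j', (j < n)%nat -> (j' < n)%nat -> f j = f j' -> j = j') -> (n <= m)%nat.
Proof.
  intros H1 H2.
  assert (HN : NoDup (map f (seq 0 n))).
  { apply NoDup_map_NoDup_ForallPairs; [|apply seq_NoDup].
    intros a b Ha Hb. apply in_seq in Ha, Hb. apply H2; lia. }
  apply NoDup_incl_length with (l' := seq 0 m) in HN.
  - rewrite length_map, !length_seq in HN. exact HN.
  - intros x Hx. apply in_map_iff in Hx. destruct Hx as [j [<- Hj]].
    apply in_seq in Hj. apply in_seq. specialize (H1 j). lia.
Qed.

Lemma coverable_points (E : R -> Prop) d n (z : nat -> R) k :
  (forall j, (j < k)%nat -> E (z j)) ->
  (forall j j', (j < k)%nat -> (j' < k)%nat -> j <> j' -> Rabs (z j - z j') > d) ->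
  coverable E d n -> (k <= n)%nat.
Proof.
  intros HE Hz [a [b [H1 H2]]].
  assert (Hc : forall j, exists i, (j < k)%nat -> (i < n)%nat /\ a i <= z j <= b i).
  { intros j. destruct (Nat.lt_ge_cases j k) as [Hj|Hj].
    - destruct (H2 _ (HE j Hj)) as [i Hi]. exists i. auto.
    - exists 0%nat. intros; lia. }
  set (f := fun j => proj1_sig (constructive_indefinite_description _ (Hc j))).
  assert (Hf : forall j, (j < k)%nat -> (f j < n)%nat /\ a (f j) <= z j <= b (f j)).
  { intros j Hj. unfold f. destruct (constructive_indefinite_description _ _). simpl. auto. }
  apply (pigeon_fun f).
  - intros j Hj. apply Hf; auto.
  - intros j j' Hj Hj' Heq. destruct (Nat.eq_dec j j') as [|Hne]; auto. exfalso.
    specialize (Hz j j' Hj Hj' Hne). destruct (Hf j Hj) as [Hi1 Hi2]. destruct (Hf j' Hj') as [Hi3 Hi4].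
    rewrite Heq in Hi2. destruct (H1 (f j') Hi3).
    
    unfold Rabs in Hz; destruct (Rcase_abs (z j - z j')); lra.
Qed.

Section Gen.
Context {N : nat} (s : strategy N).

Definition Qk (x : R) (y k : nat) : list R :=
  map (fun j => qf s j (hist s x y j) y) (seq 0 k).

Lemma Qk_S x y k : Qk x y (S k) = Qk x y k ++ [qf s k (hist s x y k) y].
Proof. unfold Qk. rewrite seq_S, map_app. reflexivity. Qed.

Lemma hist_length x y k : length (hist s x y k) = k.
Proof. induction k; simpl; auto. rewrite length_app, IHk. simpl. lia. Qed.

Lemma hist_map x y k : hist s x y k = map (resp x) (Qk x y k).
Proof.
  induction k; [reflexivity|]. rewrite Qk_S, map_app. simpl. rewrite <- IHk. reflexivity.
Qed.

Lemma hist_prefix x y j k : (j <= k)%nat -> firstn j (hist s x y k) = hist s x y j.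
Proof.
  induction k; intros H.
  - replace j with 0%nat by lia. reflexivity.
  - destruct (Nat.eq_dec j (S k)) as [->|Hne].
    + rewrite firstn_all2; auto. rewrite hist_length; lia.
    + simpl. rewrite firstn_app, hist_length.
      replace (j - k)%nat with 0%nat by lia. simpl. rewrite app_nil_r. apply IHk. lia.
Qed.

Lemma queries_Qk x y : queries s x y = Qk x y N.
Proof. reflexivity. Qed.

Lemma same_resp_hist z x' y k :
  (forall q, In q (Qk x' y k) -> resp z q = resp x' q) -> hist s z y k = hist s x' y k.
Proof.
  induction k; intros H; [reflexivity|].
  simpl. rewrite Qk_S in H.
  assert (IH : hist s z y k = hist s x' y k).
  { apply IHk. intros q Hq. apply H. apply in_or_app. auto. }
  rewrite IH. f_equal. f_equal. apply H. apply in_or_app. right. left. reflexivity.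
Qed.

Lemma In_Qk_le x y j k : (j <= k)%nat -> forall q, In q (Qk x y j) -> In q (Qk x y k).
Proof.
  intros H q Hq. unfold Qk in *. apply in_map_iff in Hq. destruct Hq as [i [<- Hi]].
  apply in_map_iff. exists i. split; auto. apply in_seq in Hi. apply in_seq. lia.
Qed.

Lemma Qk_length x y k : length (Qk x y k) = k.
Proof. unfold Qk. rewrite length_map, length_seq. auto. Qed.

Lemma hist_eq_le x x' y j k : (j <= k)%nat -> hist s x y k = hist s x' y k -> hist s x y j = hist s x' y j.
Proof.
  intros Hj H. rewrite <- (hist_prefix x y j k Hj), <- (hist_prefix x' y j k Hj), H. reflexivity.
Qed.

Lemma Qk_eq x x' y k : hist s x y k = hist s x' y k -> Qk x y k = Qk x' y k.
Proof.
  intros H. unfold Qk. apply map_ext_in. intros j Hj. apply in_seq in Hj.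
  rewrite (hist_eq_le x x' y j k); auto. lia.
Qed.

Lemma map_eq_pointwise {A B} (f g : A -> B) l : map f l = map g l -> forall a, In a l -> f a = g a.
Proof.
  induction l; simpl; intros H a0 Ha; [tauto|]. injection H as H1 H2.
  destruct Ha as [<-|Ha]; auto.
Qed.

Definition splitb (b q : R) : bool :=
  if Rlt_dec 0 q then (if Rle_dec q b then true else false) else false.

Definition gk (b x : R) (y k : nat) : list bool :=
  map (resp x) (filter (splitb b) (Qk x y k)).

Lemma hist_diff b x x' y k :
  0 <= x <= b -> 0 <= x' <= b ->
  hist s x y k <> hist s x' y k ->
  exists i, (i < length (gk b x y k))%nat /\ (i < length (gk b x' y k))%nat /\
            nth i (gk b x y k) false <> nth i (gk b x' y k) false.
Proof.
  intros Hx Hx'. induction k; intros H; [simpl in H; congruence|].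
  unfold gk. rewrite !Qk_S, !filter_app, !map_app.
  destruct (list_eq_dec Bool.bool_dec (hist s x y k) (hist s x' y k)) as [Heq|Hne].
  - simpl in H. rewrite Heq in H. 
    set (q := qf s k (hist s x' y k) y) in *.
    assert (Hr : resp x q <> resp x' q).
    { intros Hr. apply H. rewrite Hr. reflexivity. }
    rewrite Heq. fold q.
    assert (HQ := Qk_eq x x' y k Heq).
    assert (Hg : map (resp x) (filter (splitb b) (Qk x y k)) = map (resp x') (filter (splitb b) (Qk x' y k))).
    { rewrite <- HQ. apply map_ext_in. intros a Ha. apply filter_In in Ha. destruct Ha as [Ha _].
      rewrite !hist_map in Heq. rewrite <- HQ in Heq.
      apply (map_eq_pointwise _ _ _ Heq). auto. }
    assert (Hs : splitb b q = true).
    { unfold splitb. unfold resp in Hr.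
      destruct (Rlt_dec 0 q); destruct (Rle_dec q b); auto; exfalso; apply Hr;
      destruct (Rle_dec q x); destruct (Rle_dec q x'); auto; lra. }
    cbn [filter]. rewrite Hs. cbn [map].
    exists (length (map (resp x) (filter (splitb b) (Qk x y k)))).
    rewrite !length_app. simpl. rewrite <- Hg. split; [lia|]. split; [lia|].
    rewrite nth_middle. rewrite Hg, nth_middle. exact Hr.
  - destruct (IHk Hne) as [i [H1 [H2 H3]]]. unfold gk in H1, H2, H3.
    exists i. rewrite !length_app. split; [lia|]. split; [lia|].
    rewrite !app_nth1 by lia. exact H3.
Qed.

End Gen.

Fixpoint allb (n : nat) : list (list bool) :=
  match n with
  | O => [[]]
  | S n => map (cons true) (allb n) ++ map (cons false) (allb n)
  end.

Lemma allb_length n : length (allb n) = (2 ^ n)%nat.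
Proof. induction n; simpl; auto. rewrite length_app, !length_map, IHn. lia. Qed.

Lemma allb_in n l : length l = n -> In l (allb n).
Proof.
  revert l; induction n; intros l Hl.
  - destruct l; [left; auto|discriminate].
  - destruct l as [|a l]; [discriminate|]. simpl in Hl. simpl. apply in_or_app.
    destruct a; [left|right]; apply in_map; apply IHn; lia.
Qed.

Lemma count_bound {N} (s : strategy N) y eps b M :
  0 < eps -> 0 <= b < 1 ->
  (forall x, 0 <= x < 1 -> Rabs (xhat s x y - x) <= eps / 2) ->
  (forall x, 0 <= x <= b -> (length (filter (splitb b) (queries s x y)) <= M)%nat) ->
  b <= 2 ^ M * eps.
Proof.
  intros He Hb Hacc Hsp.
  destruct (Rle_dec b (2 ^ M * eps)) as [|Hgt]; auto. exfalso. apply Rnot_le_lt in Hgt.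
  set (K := (2 ^ M)%nat).
  assert (HK : INR K = 2 ^ M) by (unfold K; rewrite pow_INR; simpl; f_equal; lra).
  assert (HKp : 0 < INR K) by (rewrite HK; apply pow_lt; lra).
  set (pt := fun i : nat => INR i * b / INR K).
  set (code := fun x => gk s b x y N ++ repeat false (M - length (gk s b x y N))).
  assert (Hpt : forall i, (i <= K)%nat -> 0 <= pt i <= b).
  { intros i Hi. unfold pt. apply le_INR in Hi. pose proof (pos_INR i).
    split.
    - apply Rmult_le_pos; [apply Rmult_le_pos; lra|]. left; apply Rinv_0_lt_compat; lra.
    - apply (Rmult_le_reg_r (INR K)); auto. unfold Rdiv. rewrite Rmult_assoc, Rinv_l by lra.
      nra. }
  assert (Hlen : forall x, 0 <= x <= b -> length (code x) = M).
  { intros x Hx. unfold code. rewrite length_app, repeat_length.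
    specialize (Hsp x Hx). unfold gk. rewrite length_map. rewrite <- queries_Qk. lia. }
  assert (HN : NoDup (map (fun i => code (pt i)) (seq 0 (S K)))).
  { apply NoDup_map_NoDup_ForallPairs; [|apply seq_NoDup].
    intros i j Hi Hj Hc. apply in_seq in Hi, Hj.
    destruct (Nat.eq_dec i j) as [|Hne]; auto. exfalso.
    assert (Hd : eps < Rabs (pt i - pt j)).
    { unfold pt. replace (INR i * b / INR K - INR j * b / INR K) with ((INR i - INR j) * (b / INR K))
        by (field; lra).
      rewrite Rabs_mult. rewrite (Rabs_right (b / INR K)).
      2:{ apply Rle_ge. unfold Rdiv. apply Rmult_le_pos; [lra|]. left; apply Rinv_0_lt_compat; lra. }
      assert (H1 : 1 <= Rabs (INR i - INR j)).
      { destruct (Nat.lt_ge_cases i j).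
        - rewrite Rabs_minus_sym, Rabs_right; [|apply Rle_ge; apply Rge_le; apply Rge_minus; apply Rle_ge; apply le_INR; lia].
          rewrite <- minus_INR by lia. replace 1 with (INR 1) by reflexivity. apply le_INR. lia.
        - rewrite Rabs_right; [|apply Rle_ge; apply Rge_le; apply Rge_minus; apply Rle_ge; apply le_INR; lia].
          rewrite <- minus_INR by lia. replace 1 with (INR 1) by reflexivity. apply le_INR. lia. }
      assert (H2 : eps < b / INR K).
      { apply (Rmult_lt_reg_r (INR K)); auto. unfold Rdiv. rewrite Rmult_assoc, Rinv_l by lra. nra. }
      assert (0 < b / INR K) by lra. nra. }
    assert (Hi' := Hpt i ltac:(lia)). assert (Hj' := Hpt j ltac:(lia)).
    destruct (list_eq_dec Bool.bool_dec (hist s (pt i) y N) (hist s (pt j) y N)) as [Heq|Hne2].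
    + assert (E : xhat s (pt i) y = xhat s (pt j) y) by (unfold xhat; rewrite Heq; reflexivity).
      pose proof (Hacc (pt i) ltac:(lra)). pose proof (Hacc (pt j) ltac:(lra)). rewrite E in *.
      revert Hd H H0. unfold Rabs. repeat destruct Rcase_abs; lra.
    + destruct (hist_diff s b (pt i) (pt j) y N Hi' Hj' Hne2) as [k [Hk1 [Hk2 Hk3]]].
      apply Hk3. unfold code in Hc.
      rewrite <- (app_nth1 _ (repeat false (M - length (gk s b (pt i) y N))) false Hk1).
      rewrite <- (app_nth1 _ (repeat false (M - length (gk s b (pt j) y N))) false Hk2).
      rewrite Hc. reflexivity. }
  apply NoDup_incl_length with (l' := allb M) in HN.
  - rewrite length_map, length_seq, allb_length in HN. unfold K in HN. lia.
  - intros l Hl. apply in_map_iff in Hl. destruct Hl as [i [<- Hi]]. apply in_seq in Hi.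
    apply allb_in. apply Hlen. apply Hpt. lia.
Qed.

Lemma min_in (P : list R) : P <> [] -> exists p, In p P /\ forall q, In q P -> p <= q.
Proof.
  induction P as [|a P IH]; intros H; [congruence|].
  destruct P as [|b P'].
  - exists a. split; [left; auto|]. intros q [<-|[]]; lra.
  - destruct IH as [p [Hp1 Hp2]]; [discriminate|].
    destruct (Rle_dec a p).
    + exists a. split; [left; auto|]. intros q [<-|Hq]; [lra|]. specialize (Hp2 q Hq). lra.
    + exists p. split; [right; auto|]. intros q [<-|Hq]; [lra|]. auto.
Qed.

Definition neqb (p : R) : R -> bool := fun q => if Req_EM_T q p then false else true.

Lemma In_neqb p q P : In q (filter (neqb p) P) <-> In q P /\ q <> p.
Proof.
  rewrite filter_In. unfold neqb. destruct (Req_EM_T q p); intuition congruence.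
Qed.

Definition gap_prop (eps t : R) (P : list R) (E : R -> Prop) :=
  forall x, E x -> exists lo hi, lo <= x < hi /\ hi - lo <= eps /\ In hi P /\
     (In lo P \/ lo <= t) /\ (forall p, In p P -> ~ (lo < p < hi)).

Lemma gap_cover eps : 0 <= eps -> forall n P t E, (length P <= n)%nat ->
  (forall p, In p P -> t < p) -> gap_prop eps t P E ->
  coverable E (2 * eps) ((length P + 1) / 2).
Proof.
  intros Heps n. induction n as [n IH] using lt_wf_ind.
  intros P t E Hn Ht Hg.
  destruct P as [|p0 P0] eqn:HP.
  - apply coverable_zero. intros x Ex. destruct (Hg x Ex) as [lo [hi [_ [_ [[] _]]]]].
  - rewrite <- HP in *.
    destruct (min_in P) as [p1 [Hp1 Hp1m]]; [rewrite HP; discriminate|].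
    set (P1 := filter (neqb p1) P).
    assert (HP1len : (length P1 < length P)%nat).
    { apply filter_length_lt with p1; auto. unfold neqb. destruct (Req_EM_T p1 p1); congruence. }
    destruct P1 as [|q0 Q0] eqn:HP1.
    + (* all points equal p1 *)
      apply coverable_mono with 1%nat; [lra| |].
      2:{ change 1%nat with (2/2)%nat. apply Nat.div_le_mono; [lia|]. rewrite HP; simpl; lia. }
      apply coverable_one with (p1 - eps) (p1 + eps); try lra.
      intros x Ex. destruct (Hg x Ex) as [lo [hi [H1 [H2 [H3 [H4 H5]]]]]].
      assert (hi = p1).
      { destruct (Req_EM_T hi p1); auto. exfalso. assert (In hi P1) by (apply In_neqb; auto).
        rewrite HP1 in H. destruct H. }
      subst hi. lra.
    + rewrite <- HP1 in *.
      destruct (min_in P1) as [p2 [Hp2 Hp2m]]; [rewrite HP1; discriminate|].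
      apply In_neqb in Hp2. destruct Hp2 as [Hp2P Hp2ne].
      assert (Hp12 : p1 < p2) by (specialize (Hp1m p2 Hp2P); lra).
      set (P2 := filter (neqb p2) P1).
      assert (HP2len : (length P2 < length P1)%nat).
      { apply filter_length_lt with p2; auto. apply In_neqb; auto.
        unfold neqb. destruct (Req_EM_T p2 p2); congruence. }
      assert (HP2 : forall q, In q P2 <-> In q P /\ q <> p1 /\ q <> p2).
      { intros q. unfold P2. rewrite In_neqb. unfold P1. rewrite In_neqb. tauto. }
      assert (Hcov2 : coverable (fun x => E x /\ p2 <= x) (2 * eps) ((length P2 + 1) / 2)).
      { apply (IH (length P2)) with (t := p2); [lia|lia| |].
        - intros q Hq. apply HP2 in Hq. destruct Hq as [Hq1 [Hq2 Hq3]].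
          assert (In q P1) by (apply In_neqb; auto). specialize (Hp2m q H). lra.
        - intros x [Ex Hx]. destruct (Hg x Ex) as [lo [hi [H1 [H2 [H3 [H4 H5]]]]]].
          exists lo, hi. split; [auto|]. split; [auto|].
          assert (Hhi : p1 < hi /\ p2 < hi) by lra.
          split; [apply HP2; split; [auto|]; split; lra|].
          split; [|intros p Hp; apply HP2 in Hp; apply H5; tauto].
          assert (Hlo : p2 <= lo).
          { destruct (Rle_dec p2 lo); auto. exfalso. apply (H5 p2 Hp2P). lra. }
          destruct (Req_EM_T lo p2) as [->|Hne]; [right; lra|].
          destruct H4 as [H4|H4]; [|exfalso; specialize (Ht p1 Hp1); lra].
          left. apply HP2. split; [auto|]. split; lra. }
      assert (Hcov1 : coverable (fun x => E x /\ x < p2) (2 * eps) 1).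
      { apply coverable_one with (p1 - eps) (p1 + eps); try lra.
        intros x [Ex Hx]. destruct (Hg x Ex) as [lo [hi [H1 [H2 [H3 [H4 H5]]]]]].
        destruct (Req_EM_T hi p1) as [->|Hne]; [lra|].
        assert (Hhi : In hi P1) by (apply In_neqb; auto).
        pose proof (Hp2m hi Hhi). pose proof (Hp1m hi H3).
        assert (Hlo : p1 <= lo).
        { destruct (Rle_dec p1 lo); auto. exfalso. apply (H5 p1 Hp1). lra. }
        destruct (Req_EM_T lo p1) as [->|Hne2]; [lra|].
        destruct H4 as [H4|H4]; [|specialize (Ht p1 Hp1); lra].
        assert (Hlo1 : In lo P1) by (apply In_neqb; auto). specialize (Hp2m lo Hlo1). lra. }
      apply coverable_sub with (fun x => (E x /\ x < p2) \/ (E x /\ p2 <= x)).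
      { intros x Ex. destruct (Rlt_le_dec x p2); auto. }
      apply coverable_mono with (1 + (length P2 + 1) / 2)%nat; [lra| |].
      * apply coverable_union; auto.
      * assert (H2le : (length P2 + 2 <= length P)%nat) by lia.
        assert (Hd : ((length P2 + 1) / 2 + 1 <= (length P + 1)/2)%nat).
        { rewrite <- (Nat.div_add (length P2 + 1) 1 2) by lia. apply Nat.div_le_mono; lia. }
        lia.
Qed.

Lemma coverable_d_mono E d d' n : d <= d' -> coverable E d n -> coverable E d' n.
Proof.
  intros Hd [a [b [H1 H2]]]. exists a, b. split; auto.
  intros i Hi. specialize (H1 i Hi). lra.
Qed.

Lemma filter_disj {A} (f g : A -> bool) l :
  (forall a, f a = true -> g a = false) ->
  (length (filter f l) + length (filter g l) <= length l)%nat.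
Proof.
  intros H. induction l as [|a l IH]; simpl; auto.
  destruct (f a) eqn:Ef.
  - rewrite (H a Ef). simpl. lia.
  - destruct (g a); simpl; lia.
Qed.

Lemma lo_exists (Q : list R) x : 0 <= x ->
  exists lo, (lo = 0 \/ In lo Q) /\ lo <= x /\ forall q, In q Q -> q <= x -> q <= lo.
Proof.
  intros Hx. induction Q as [|a Q IH].
  - exists 0. split; [auto|]. split; [auto|]. intros q [].
  - destruct IH as [lo [H1 [H2 H3]]].
    destruct (Rle_dec a x) as [Hax|Hax].
    + destruct (Rle_dec a lo).
      * exists lo. split; [destruct H1; auto; right; right; auto|]. split; auto.
        intros q [<-|Hq] Hqx; auto.
      * exists a. split; [right; left; auto|]. split; auto.
        intros q [<-|Hq] Hqx; [lra|]. specialize (H3 q Hq Hqx). lra.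
    + exists lo. split; [destruct H1; auto; right; right; auto|]. split; auto.
      intros q [<-|Hq] Hqx; [lra|auto].
Qed.

Lemma hi_exists (Q : list R) x : x < 1 ->
  exists hi, (hi = 1 \/ In hi Q) /\ x < hi /\ hi <= 1 /\ forall q, In q Q -> x < q -> hi <= q.
Proof.
  intros Hx. induction Q as [|a Q IH].
  - exists 1. split; [auto|]. split; [auto|]. split; [lra|]. intros q [].
  - destruct IH as [hi [H1 [H2 [H2' H3]]]].
    destruct (Rlt_dec x a) as [Hax|Hax].
    + destruct (Rle_dec hi a).
      * exists hi. split; [destruct H1; auto; right; right; auto|]. split; auto. split; auto.
        intros q [<-|Hq] Hqx; auto.
      * exists a. split; [right; left; auto|]. split; auto. split; [lra|].
        intros q [<-|Hq] Hqx; [lra|]. specialize (H3 q Hq Hqx). lra.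
    + exists hi. split; [destruct H1; auto; right; right; auto|]. split; auto. split; auto.
      intros q [<-|Hq] Hqx; [lra|auto].
Qed.

Lemma queries_range {N} (s : strategy N) x y q : In q (queries s x y) -> 0 <= q < 1.
Proof.
  unfold queries. intros H. apply in_map_iff in H. destruct H as [k [<- _]]. apply qf_range.
Qed.

Lemma queries_length {N} (s : strategy N) x y : length (queries s x y) = N.
Proof. unfold queries. rewrite length_map, length_seq. auto. Qed.

Lemma acc_seed {N} (s : strategy N) eps delta L y x :
  is_private s eps delta L -> (1 <= y <= nseeds s)%nat -> 0 <= x < 1 ->
  Rabs (xhat s x y - x) <= eps / 2.
Proof.
  intros [_ [Hacc _]] Hy Hx.
  exact (seed_prob_one_inv s _ (Hacc x Hx) y Hy).
Qed.

Lemma gap_small {N} (s : strategy N) eps delta L x' y' :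
  is_private s eps delta L -> (1 <= y' <= nseeds s)%nat -> 0 <= x' < 1 ->
  forall lo hi, 0 <= lo -> lo <= x' < hi -> hi <= 1 ->
  (forall q, In q (queries s x' y') -> (q <= x' -> q <= lo) /\ (x' < q -> hi <= q)) ->
  hi - lo <= eps.
Proof.
  intros Hp Hy Hx lo hi Hlo0 Hlo Hhi1 Hq.
  assert (Hz : forall z, lo <= z < hi -> z - lo <= eps).
  { intros z Hz.
    assert (Hs : forall z', lo <= z' < hi -> hist s z' y' N = hist s x' y' N).
    { intros z' Hz'. apply same_resp_hist. intros q Hqin.
      rewrite <- queries_Qk in Hqin. destruct (Hq q Hqin) as [Ha Hb].
      unfold resp. destruct (Rle_dec q z'); destruct (Rle_dec q x'); auto; exfalso.
      - apply Rnot_le_lt in n. specialize (Hb n). lra.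
      - apply Rnot_le_lt in n. specialize (Ha r). lra. }
    pose proof (acc_seed s eps delta L y' z Hp Hy ltac:(lra)).
    pose proof (acc_seed s eps delta L y' lo Hp Hy ltac:(lra)).
    unfold xhat in *. rewrite (Hs z Hz) in H. rewrite (Hs lo ltac:(lra)) in H0.
    revert H H0. unfold Rabs. repeat destruct Rcase_abs; lra. }
  destruct (Rle_dec (hi - lo) eps); auto. exfalso.
  specialize (Hz ((lo + eps + hi) / 2)). 
  assert (0 <= eps).
  { pose proof (acc_seed s eps delta L y' x' Hp Hy Hx). pose proof (Rabs_pos (xhat s x' y' - x')). lra. }
  lra.
Qed.

Definition gtb (d : R) : R -> bool := fun q => if Rlt_dec d q then true else false.

Lemma F_bound {N} (s : strategy N) eps delta L x :
  0 < eps -> 2 * eps < delta -> delta < 1 -> is_private s eps delta L ->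
  0 <= x < 1 ->
  (L <= 1 + (length (filter (gtb delta) (queries s x 1%nat)) + 2) / 2)%nat.
Proof.
  intros He Hed Hd1 Hp Hx.
  set (Q := queries s x 1%nat).
  pose proof (nseeds_pos _ s) as Hns.
  assert (HQ : Qset s x Q).
  { apply seed_prob_pos with 1%nat; [lia|reflexivity]. }
  destruct Hp as [Hdist [Hacc Hcov]].
  assert (Hp : is_private s eps delta L) by (split; auto).
  specialize (Hcov x Q Hx HQ).
  set (P := filter (gtb delta) Q ++ [1]).
  assert (Hc : coverable (info_set s Q) delta (1 + (length P + 1) / 2)).
  { apply coverable_sub with (fun x' => (0 <= x' <= delta) \/ (info_set s Q x' /\ delta < x')).
    { intros x' [Hx' Hq]. destruct (Rle_dec x' delta); [left; lra|right; split; [split; auto|lra]]. }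
    apply coverable_union.
    - apply coverable_one with 0 delta; try lra. auto.
    - apply coverable_d_mono with (2 * eps); [lra|].
      apply gap_cover with (n := length P) (t := delta); [lra|lia| |].
      + intros p Hp'. unfold P in Hp'. apply in_app_or in Hp'. destruct Hp' as [Hp'|[<-|[]]]; [|lra].
        apply filter_In in Hp'. unfold gtb in Hp'. destruct Hp' as [_ Hp'].
        destruct (Rlt_dec delta p); [auto|discriminate].
      + intros x' [[Hx' HQ'] Hdx'].
        destruct (seed_prob_pos_inv s _ HQ') as [y' [Hy' Hqy']].
        destruct (lo_exists Q x' ltac:(lra)) as [lo [Hl1 [Hl2 Hl3]]].
        destruct (hi_exists Q x' ltac:(lra)) as [hi [Hh1 [Hh2 [Hh3 Hh4]]]].
        assert (Hlo0 : 0 <= lo).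
        { destruct Hl1 as [->|Hl1]; [lra|]. apply (queries_range s x 1%nat lo Hl1). }
        exists lo, hi. split; [lra|]. split.
        { apply (gap_small s eps delta L x' y' Hp Hy' ltac:(lra) lo hi Hlo0 ltac:(lra) Hh3).
          intros q Hq. rewrite Hqy' in Hq. split; intros; auto. }
        split.
        { unfold P. apply in_or_app. destruct Hh1 as [->|Hh1]; [right; left; auto|left].
          apply filter_In. split; auto. unfold gtb. destruct (Rlt_dec delta hi); auto; lra. }
        split.
        { destruct Hl1 as [->|Hl1]; [right; lra|].
          destruct (Rle_dec lo delta); [right; auto|left].
          unfold P. apply in_or_app. left. apply filter_In. split; auto. unfold gtb.
          destruct (Rlt_dec delta lo); auto; lra. }
        intros p Hp' Hb. unfold P in Hp'. apply in_app_or in Hp'. destruct Hp' as [Hp'|[<-|[]]]; [|lra].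
        apply filter_In in Hp'. destruct Hp' as [Hp' _].
        destruct (Rle_dec p x'); [specialize (Hl3 p Hp' r); lra|].
        specialize (Hh4 p Hp' ltac:(lra)). lra. }
  assert (Hex := cover_number_spec _ _ _ Hc). destruct Hex as [_ Hmin].
  specialize (Hmin _ Hc).
  unfold P in Hmin. rewrite length_app in Hmin. cbn [length] in Hmin.
  replace (length (filter (gtb delta) Q) + 1 + 1)%nat with (length (filter (gtb delta) Q) + 2)%nat in Hmin by lia.
  lia.
Qed.

Lemma div2_helper F L : (L <= 1 + (F + 2) / 2)%nat -> (2 * L - 4 <= F)%nat.
Proof.
  intros H. pose proof (Nat.mul_div_le (F + 2) 2). lia.
Qed.

Lemma lower_bounds {N} (s : strategy N) eps delta L :
  0 < eps -> 2 * eps < delta -> delta < 1 -> is_private s eps delta L ->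
  1 <= 2 ^ N * eps /\ (2 * L - 4 <= N)%nat /\ delta <= 2 ^ (N - (2 * L - 4)) * eps.
Proof.
  intros He Hed Hd1 Hp.
  pose proof (nseeds_pos _ s) as Hns.
  assert (Hacc : forall x, 0 <= x < 1 -> Rabs (xhat s x 1%nat - x) <= eps / 2).
  { intros x Hx. apply (acc_seed s eps delta L); auto; lia. }
  assert (HF : forall x, 0 <= x < 1 -> (2 * L - 4 <= length (filter (gtb delta) (queries s x 1%nat)))%nat).
  { intros x Hx. apply div2_helper. apply (F_bound s eps delta L x); auto. }
  split; [|split].
  - destruct (Rle_dec 1 (2 ^ N * eps)) as [|Hlt]; auto. exfalso. apply Rnot_le_lt in Hlt.
    assert (Hpos : 0 <= 2 ^ N * eps) by (apply Rmult_le_pos; [apply pow_le|]; lra).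
    set (b := (1 + 2 ^ N * eps) / 2).
    assert (Hb : b <= 2 ^ N * eps).
    { apply (count_bound s 1%nat eps b N He ltac:(unfold b; lra) Hacc).
      intros x _. rewrite <- (queries_length s x 1%nat). apply filter_length_le. }
    unfold b in Hb. lra.
  - specialize (HF 0 ltac:(lra)). pose proof (filter_length_le (gtb delta) (queries s 0 1%nat)).
    rewrite queries_length in H. lia.
  - apply (count_bound s 1%nat eps delta (N - (2 * L - 4)) He ltac:(lra) Hacc).
    intros x Hx. specialize (HF x ltac:(lra)).
    pose proof (filter_disj (splitb delta) (gtb delta) (queries s x 1%nat)) as Hd.
    rewrite queries_length in Hd.
    assert (Hdd : forall a, splitb delta a = true -> gtb delta a = false).
    { intros a. unfold splitb, gtb. destruct (Rlt_dec 0 a); destruct (Rle_dec a delta);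
      destruct (Rlt_dec delta a); auto; try discriminate; lra. }
    specialize (Hd Hdd). lia.
Qed.

Section Constr.
Variables (L m : nat).
Hypothesis HL : (2 <= L)%nat.

Definition Lr : R := INR L.
Definition w : R := / 2 ^ m.
Definition p1 (j : nat) : R := INR j / Lr.
Definition p2 (j : nat) : R := (INR j + w) / Lr.
Definition gapI (g : nat) : R * R := (p2 g, p1 (S g)).
Definition midp (I : R * R) : R := (fst I + snd I) / 2.
Definition step (I : R * R) (b : bool) : R * R :=
  if b then (midp I, snd I) else (fst I, midp I).
Definition bis (I : R * R) (bits : list bool) : R * R := fold_left step bits I.
Definition cnt (l : list bool) : nat := length (filter (fun b => b) l).
Definition c1 (h : list bool) : nat := cnt (firstn L h).
Definition c2 (h : list bool) : nat := cnt (firstn L (skipn L h)).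
Definition luckyb (h : list bool) : bool := negb (Nat.eqb (c1 h) (c2 h)).
Definition blk (h : list bool) : nat := (c1 h - 1)%nat.
Definition fg (y : nat) : nat := ((y - 1) mod L)%nat.
Definition fb (y i : nat) : list bool := map (Nat.testbit ((y - 1) / L)) (seq 0 i).
Definition ph1 (k : nat) : R := if Nat.ltb k L then p1 k else p2 (k - L).
Definition ph2 (i : nat) (h : list bool) (y : nat) : R :=
  if luckyb h then midp (bis (gapI (fg y)) (fb y i))
  else midp (bis (gapI (blk h)) (firstn i (skipn (2 * L) h))).
Definition qfun (k : nat) (h : list bool) (y : nat) : R :=
  if Nat.ltb k (2 * L) then ph1 k else ph2 (k - 2 * L) h y.
Definition estf (h : list bool) (y : nat) : R :=
  if luckyb h then (INR (blk h) + w / 2) / Lr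
  else midp (bis (gapI (blk h)) (skipn (2 * L) h)).

Lemma Lr_pos : 0 < Lr.
Proof. unfold Lr. apply lt_0_INR. lia. Qed.

Lemma w_pos : 0 < w.
Proof. unfold w. apply Rinv_0_lt_compat. apply pow_lt. lra. Qed.

Lemma w_le1 : w <= 1.
Proof.
  unfold w. rewrite <- (Rinv_1). apply Rinv_le_contravar; [lra|]. 
  clear. induction m; simpl; lra.
Qed.

Lemma bis_props I bits : fst I < snd I ->
  fst I <= fst (bis I bits) /\ fst (bis I bits) < snd (bis I bits) /\ snd (bis I bits) <= snd I /\
  snd (bis I bits) - fst (bis I bits) = (snd I - fst I) / 2 ^ length bits.
Proof.
  unfold bis. revert I. induction bits as [|b bits IH]; intros I HI; simpl.
  - split; [lra|]. split; [lra|]. split; [lra|]. field.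
  - assert (Hs : fst (step I b) < snd (step I b) /\ fst I <= fst (step I b) /\ snd (step I b) <= snd I /\
                 snd (step I b) - fst (step I b) = (snd I - fst I) / 2).
    { unfold step, midp. destruct b; simpl; repeat split; try lra. }
    destruct Hs as [H1 [H2 [H3 H4]]].
    destruct (IH (step I b) H1) as [G1 [G2 [G3 G4]]].
    split; [lra|]. split; [lra|]. split; [lra|]. rewrite G4, H4. field. apply pow_nonzero. lra.
Qed.

Lemma midp_in I : fst I < snd I -> fst I < midp I < snd I.
Proof. unfold midp. lra. Qed.

Hypothesis Hm : (1 <= m)%nat.

Lemma w_lt1 : w < 1.
Proof.
  assert (H2 : 1 < 2 ^ m).
  { clear -Hm. induction m; [lia|]. simpl. destruct n; simpl; [lra|].
    assert (1 < 2 ^ S n) by (apply IHn; lia). simpl in H. lra. }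
  unfold w. rewrite <- (Rinv_1). apply Rinv_lt_contravar; [lra|auto].
Qed.

Lemma divL_lt a b : a < b -> a / Lr < b / Lr.
Proof. intros H. pose proof Lr_pos. unfold Rdiv. apply Rmult_lt_compat_r; [apply Rinv_0_lt_compat|]; lra. Qed.
Lemma divL_le a b : a <= b -> a / Lr <= b / Lr.
Proof. intros H. pose proof Lr_pos. unfold Rdiv. apply Rmult_le_compat_r; [left; apply Rinv_0_lt_compat|]; lra. Qed.
Lemma divL_one : Lr / Lr = 1.
Proof. pose proof Lr_pos. field. lra. Qed.
Lemma divL_zero : 0 / Lr = 0.
Proof. pose proof Lr_pos. field. lra. Qed.

Lemma divL_le1 a : a <= Lr -> a / Lr <= 1.
Proof. intros H. rewrite <- divL_one. apply divL_le. auto. Qed.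
Lemma divL_lt1 a : a < Lr -> a / Lr < 1.
Proof. intros H. rewrite <- divL_one. apply divL_lt. auto. Qed.
Lemma divL_nonneg a : 0 <= a -> 0 <= a / Lr.
Proof. intros H. rewrite <- divL_zero. apply divL_le. auto. Qed.

Lemma gap_props g : (g < L)%nat -> 0 <= fst (gapI g) /\ fst (gapI g) < snd (gapI g) /\ snd (gapI g) <= 1
   /\ snd (gapI g) - fst (gapI g) = (1 - w) / Lr.
Proof.
  intros Hg. pose proof Lr_pos. pose proof w_pos. pose proof w_lt1.
  unfold gapI, p1, p2; cbn [fst snd].
  assert (HgL : INR (S g) <= Lr) by (unfold Lr; apply le_INR; lia).
  rewrite S_INR in *. pose proof (pos_INR g).
  split; [apply divL_nonneg; lra|].
  split; [apply divL_lt; lra|].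
  split; [apply divL_le1; lra|].
  field. lra.
Qed.

Lemma blk_lt h : (blk h < L)%nat.
Proof.
  unfold blk, c1, cnt. pose proof (filter_length_le (fun b : bool => b) (firstn L h)).
  rewrite length_firstn in H. lia.
Qed.

Lemma fg_lt y : (fg y < L)%nat.
Proof. unfold fg. apply Nat.mod_upper_bound. lia. Qed.

Lemma mid_gap_range g bits : (g < L)%nat -> 0 <= midp (bis (gapI g) bits) < 1.
Proof.
  intros Hg. destruct (gap_props g Hg) as [H1 [H2 [H3 _]]].
  destruct (bis_props (gapI g) bits H2) as [B1 [B2 [B3 _]]].
  pose proof (midp_in _ B2). lra.
Qed.

Lemma p1_range j : (j < L)%nat -> 0 <= p1 j < 1.
Proof.
  intros Hj. pose proof Lr_pos. unfold p1. pose proof (pos_INR j).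
  assert (INR j < Lr) by (apply lt_INR; lia).
  split; [apply divL_nonneg; lra|apply divL_lt1; lra].
Qed.

Lemma p2_range j : (j < L)%nat -> 0 <= p2 j < 1.
Proof.
  intros Hj. pose proof Lr_pos. unfold p2. pose proof (pos_INR j). pose proof w_pos. pose proof w_lt1.
  assert (INR (S j) <= Lr) by (apply le_INR; lia). rewrite S_INR in H3.
  split; [apply divL_nonneg; lra|apply divL_lt1; lra].
Qed.

Lemma qfun_range k h y : 0 <= qfun k h y < 1.
Proof.
  unfold qfun, ph1, ph2.
  destruct (Nat.ltb_spec k (2 * L)).
  - destruct (Nat.ltb_spec k L); [apply p1_range; auto|apply p2_range; lia].
  - destruct (luckyb h); apply mid_gap_range; [apply fg_lt|apply blk_lt].
Qed.

Lemma estf_range h y : 0 <= estf h y < 1.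
Proof.
  unfold estf. destruct (luckyb h); [|apply mid_gap_range, blk_lt].
  pose proof (blk_lt h). pose proof w_pos. pose proof w_lt1. pose proof (pos_INR (blk h)).
  assert (INR (S (blk h)) <= Lr) by (apply le_INR; lia). rewrite S_INR in H3.
  split; [apply divL_nonneg; lra|apply divL_lt1; lra].
Qed.

Lemma nseeds_pos' : (0 < L * 2 ^ m)%nat.
Proof. pose proof (Nat.pow_nonzero 2 m ltac:(lia)). lia. Qed.

Definition strat : strategy (2 * L + m) :=
  {| nseeds := L * 2 ^ m; nseeds_pos := nseeds_pos'; qf := qfun; est := estf;
     qf_range := qfun_range; est_range := estf_range |}.

End Constr.

Lemma map_seq_shift {A} (f : nat -> A) s n : map f (seq s n) = map (fun i => f (s + i)%nat) (seq 0 n).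
Proof.
  induction n; [reflexivity|]. rewrite !seq_S, !map_app, IHn. simpl. reflexivity.
Qed.

Lemma firstn_seq0 i n : (i <= n)%nat -> firstn i (seq 0 n) = seq 0 i.
Proof.
  intros H. replace n with (i + (n - i))%nat by lia. rewrite seq_app, firstn_app, length_seq.
  rewrite firstn_all2 by (rewrite length_seq; lia). replace (i - i)%nat with 0%nat by lia.
  simpl. apply app_nil_r.
Qed.

Lemma cnt_app l1 l2 : cnt (l1 ++ l2) = (cnt l1 + cnt l2)%nat.
Proof. unfold cnt. rewrite filter_app, length_app. auto. Qed.

Lemma cnt_mono (f : nat -> R) x n : (forall i j, (i <= j)%nat -> f i <= f j) ->
  (cnt (map (fun j => resp x (f j)) (seq 0 n)) <= n)%nat /\
  forall j, (j < n)%nat -> (f j <= x <-> (j < cnt (map (fun j => resp x (f j)) (seq 0 n)))%nat).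
Proof.
  intros Hf. induction n.
  - unfold cnt; simpl. split; [lia|]. intros; lia.
  - rewrite seq_S, map_app, cnt_app. destruct IHn as [IH1 IH2].
    set (c := cnt (map (fun j => resp x (f j)) (seq 0 n))) in *.
    simpl map.
    destruct (Rle_dec (f n) x) as [Hn|Hn].
    + assert (Hr : resp x (f n) = true) by (unfold resp; destruct (Rle_dec (f n) x); tauto).
      rewrite Hr. change (cnt [true]) with 1%nat.
      assert (Hc : c = n).
      { destruct (Nat.lt_ge_cases c n) as [Hl|]; [|lia].
        exfalso. destruct n; [lia|]. assert (H := proj1 (IH2 n ltac:(lia))).
        specialize (Hf n (S n) ltac:(lia)). specialize (H ltac:(lra)). lia. }
      rewrite Hc. split; [lia|]. intros j Hj. split; [lia|]. intros _.
      specialize (Hf j n ltac:(lia)). lra.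
    + assert (Hr : resp x (f n) = false) by (unfold resp; destruct (Rle_dec (f n) x); tauto).
      rewrite Hr. change (cnt [false]) with 0%nat.
      split; [lia|]. intros j Hj. destruct (Nat.eq_dec j n) as [->|Hne].
      * split; [intros; lra|lia].
      * rewrite IH2 by lia. lia.
Qed.

Section Props.
Variables (L m : nat).
Hypothesis HL : (2 <= L)%nat.
Hypothesis Hm : (1 <= m)%nat.

Let S := strat L m HL Hm.
Let N0 := (2 * L + m)%nat.

Definition C1 x := cnt (map (fun j => resp x (p1 L j)) (seq 0 L)).
Definition C2 x := cnt (map (fun j => resp x (p2 L m j)) (seq 0 L)).

Lemma Qk_ph1 x y k : (k <= 2 * L)%nat -> Qk S x y k = map (ph1 L m) (seq 0 k).
Proof.
  intros Hk. unfold Qk. apply map_ext_in. intros j Hj. apply in_seq in Hj.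
  simpl. unfold qfun. destruct (Nat.ltb_spec j (2 * L)); [auto|lia].
Qed.

Lemma hist_ph1 x y k : (k <= 2 * L)%nat -> hist S x y k = map (fun j => resp x (ph1 L m j)) (seq 0 k).
Proof.
  intros Hk. rewrite hist_map, Qk_ph1 by auto. rewrite map_map. reflexivity.
Qed.

Lemma c1_hist x y k : (2 * L <= k)%nat -> c1 L (hist S x y k) = C1 x.
Proof.
  intros Hk. unfold c1. rewrite hist_prefix by lia. rewrite hist_ph1 by lia.
  unfold C1. f_equal. apply map_ext_in. intros j Hj. apply in_seq in Hj.
  unfold ph1. destruct (Nat.ltb_spec j L); [auto|lia].
Qed.

Lemma c2_hist x y k : (2 * L <= k)%nat -> c2 L (hist S x y k) = C2 x.
Proof.
  intros Hk. unfold c2. rewrite firstn_skipn_comm. rewrite hist_prefix by lia. rewrite hist_ph1 by lia.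
  replace (L + L)%nat with (L + L)%nat by lia. rewrite seq_app, map_app, skipn_app, length_map, length_seq.
  rewrite skipn_all2 by (rewrite length_map, length_seq; lia). replace (L - L)%nat with 0%nat by lia.
  simpl. rewrite map_seq_shift. unfold C2. f_equal. apply map_ext_in. intros j Hj. apply in_seq in Hj.
  unfold ph1. simpl. destruct (Nat.ltb_spec (L + j) L); [lia|]. replace (L + j - L)%nat with j by lia. reflexivity.
Qed.
End Props.

Section Props2.
Variables (L m : nat).
Hypothesis HL : (2 <= L)%nat.
Hypothesis Hm : (1 <= m)%nat.

Local Notation SS := (strat L m HL Hm).

Lemma p1_mono i j : (i <= j)%nat -> p1 L i <= p1 L j.
Proof. intros H. unfold p1. apply (divL_le L HL). apply le_INR. auto. Qed.
Lemma p2_mono i j : (i <= j)%nat -> p2 L m i <= p2 L m j.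
Proof. intros H. unfold p2. apply (divL_le L HL). apply le_INR in H. lra. Qed.
Lemma p1_le_p2 j : p1 L j <= p2 L m j.
Proof. unfold p1, p2. apply (divL_le L HL). pose proof (w_pos m). lra. Qed.
Lemma p1_L : p1 L L = 1.
Proof. unfold p1. apply (divL_one L HL). Qed.
Lemma p1_0 : p1 L 0 = 0.
Proof. unfold p1. simpl. apply (divL_zero L HL). Qed.

Lemma block x : 0 <= x < 1 ->
  (C1 L x - 1 < L)%nat /\ (1 <= C1 L x)%nat /\ p1 L (C1 L x - 1)%nat <= x /\ x < p1 L (S (C1 L x - 1))%nat.
Proof.
  intros Hx. destruct (cnt_mono (p1 L) x L p1_mono) as [H1 H2]. change (cnt (map (fun j => resp x (p1 L j)) (seq 0 L))) with (C1 L x) in H1, H2.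
  assert (Hc : (1 <= C1 L x)%nat).
  { assert (0 < C1 L x)%nat; [apply H2; [lia|rewrite p1_0; lra]|lia]. }
  split; [lia|]. split; [auto|]. split.
  - apply H2; lia.
  - destruct (Nat.eq_dec (S (C1 L x - 1)) L) as [E|E].
    + rewrite E, p1_L. lra.
    + destruct (Rlt_le_dec x (p1 L (S (C1 L x - 1))%nat)) as [|Hle]; auto.
      apply H2 in Hle; lia.
Qed.

Lemma lucky_char x : 0 <= x < 1 -> (Nat.eqb (C1 L x) (C2 L m x) = true <-> p2 L m (C1 L x - 1)%nat <= x).
Proof.
  intros Hx. destruct (block x Hx) as [B1 [B2 [B3 B4]]].
  destruct (cnt_mono (p1 L) x L p1_mono) as [H1 H2]. change (cnt (map (fun j => resp x (p1 L j)) (seq 0 L))) with (C1 L x) in H1, H2.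
  destruct (cnt_mono (p2 L m) x L p2_mono) as [K1 K2]. change (cnt (map (fun j => resp x (p2 L m j)) (seq 0 L))) with (C2 L m x) in K1, K2.
  rewrite Nat.eqb_eq. split.
  - intros E. apply K2; lia.
  - intros Hp. apply K2 in Hp; [|lia].
    destruct (Nat.lt_ge_cases (C1 L x) (C2 L m x)) as [Hlt|]; [|lia].
    exfalso. assert (Hq : p2 L m (C1 L x) <= x) by (apply K2; lia).
    pose proof (p1_le_p2 (C1 L x)).
    assert (C1 L x < C1 L x)%nat; [apply H2; [lia|lra]|lia].
Qed.

Lemma lucky_hist x y k : (2 * L <= k)%nat ->
  luckyb L (hist SS x y k) = negb (Nat.eqb (C1 L x) (C2 L m x)).
Proof. intros Hk. unfold luckyb. rewrite c1_hist, c2_hist by auto. reflexivity. Qed.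

Lemma blk_hist x y k : (2 * L <= k)%nat -> blk L (hist SS x y k) = (C1 L x - 1)%nat.
Proof. intros Hk. unfold blk. rewrite c1_hist by auto. reflexivity. Qed.

Definition Qform (G : nat) (Bits : list bool) : list R :=
  map (ph1 L m) (seq 0 (2 * L)) ++ map (fun i => midp (bis (gapI L m G) (firstn i Bits))) (seq 0 m).

Definition isl x := negb (Nat.eqb (C1 L x) (C2 L m x)).
Definition GG x y := if isl x then fg L y else (C1 L x - 1)%nat.
Definition BB x y := if isl x then fb L y m else skipn (2 * L) (hist SS x y (2 * L + m)).

Lemma fb_firstn y i : (i <= m)%nat -> fb L y i = firstn i (fb L y m).
Proof. intros Hi. unfold fb. rewrite firstn_map, firstn_seq0 by auto. reflexivity. Qed.

Lemma queries_form x y : queries SS x y = Qform (GG x y) (BB x y).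
Proof.
  unfold queries, Qform. rewrite seq_app, map_app. f_equal.
  - apply map_ext_in. intros j Hj. apply in_seq in Hj. change (qf (strat L m HL Hm)) with (qfun L m). unfold qfun.
    destruct (Nat.ltb_spec j (2 * L)); [auto|lia].
  - rewrite map_seq_shift. apply map_ext_in. intros i Hi. apply in_seq in Hi. change (qf (strat L m HL Hm)) with (qfun L m). unfold qfun.
    replace (0 + 2 * L + i)%nat with (2 * L + i)%nat by lia.
    destruct (Nat.ltb_spec (2 * L + i) (2 * L)); [lia|].
    replace (2 * L + i - 2 * L)%nat with i by lia. unfold ph2.
    rewrite lucky_hist by lia. rewrite blk_hist by lia. unfold GG, BB, isl.
    destruct (negb _).
    + rewrite fb_firstn by lia. reflexivity.
    + f_equal. f_equal.
      rewrite <- (hist_prefix SS x y (2 * L + i) (2 * L + m)) by lia.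
      rewrite skipn_firstn_comm. rewrite firstn_firstn. f_equal. lia.
Qed.

End Props2.

Lemma firstn_S_nth {A} (l : list A) i d : (i < length l)%nat -> firstn (S i) l = firstn i l ++ [nth i l d].
Proof.
  revert i; induction l as [|a l IH]; intros i Hi; simpl in *; [lia|].
  destruct i; simpl; auto. rewrite IH by lia. reflexivity.
Qed.

Lemma bis_snoc I l b : bis I (l ++ [b]) = step (bis I l) b.
Proof. unfold bis. rewrite fold_left_app. reflexivity. Qed.

Section Props3.
Variables (L m : nat).
Hypothesis HL : (2 <= L)%nat.
Hypothesis Hm : (1 <= m)%nat.
Local Notation SS := (strat L m HL Hm).

Lemma Qform_nth2 G Bits i : (i < m)%nat ->
  nth (2 * L + i) (Qform L m G Bits) 0 = midp (bis (gapI L m G) (firstn i Bits)).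
Proof.
  intros Hi. unfold Qform. rewrite app_nth2; rewrite length_map, length_seq; [|lia].
  replace (2 * L + i - 2 * L)%nat with i by lia.
  rewrite nth_indep with (d' := midp (bis (gapI L m G) (firstn 0 Bits))) by (rewrite length_map, length_seq; lia).
  rewrite (map_nth (fun i => midp (bis (gapI L m G) (firstn i Bits))) (seq 0 m) 0%nat i), seq_nth by lia. reflexivity.
Qed.

Lemma BB_length x y : length (BB L m HL Hm x y) = m.
Proof.
  unfold BB. destruct (isl L m x).
  - unfold fb. rewrite length_map, length_seq. reflexivity.
  - rewrite length_skipn, hist_length. lia.
Qed.

Lemma GG_lt x y : (0 <= x < 1) -> (GG L m x y < L)%nat.
Proof.
  intros Hx. unfold GG. destruct (isl L m x); [apply (fg_lt L m HL Hm)|].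
  destruct (block L m HL Hm x Hx). lia.
Qed.

Lemma real_inv x y : 0 <= x < 1 -> isl L m x = false ->
  forall i, (i <= m)%nat ->
  fst (bis (gapI L m (C1 L x - 1)) (firstn i (BB L m HL Hm x y))) <= x <
  snd (bis (gapI L m (C1 L x - 1)) (firstn i (BB L m HL Hm x y))).
Proof.
  intros Hx Hl. induction i; intros Hi.
  - simpl. unfold bis; simpl. unfold isl in Hl. apply Bool.negb_false_iff in Hl.
    apply (lucky_char L m HL Hm x Hx) in Hl. destruct (block L m HL Hm x Hx) as [_ [_ [_ B4]]].
    unfold gapI. simpl. split; auto.
  - specialize (IHi ltac:(lia)).
    rewrite (firstn_S_nth _ i false) by (rewrite BB_length; lia).
    rewrite bis_snoc.
    assert (Hn : nth i (BB L m HL Hm x y) false =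
                 resp x (midp (bis (gapI L m (C1 L x - 1)) (firstn i (BB L m HL Hm x y))))).
    { assert (Hq : nth (2*L+i) (hist SS x y (2*L+m)) false = resp x (nth (2*L+i) (queries SS x y) 0)).
      { rewrite hist_map, <- queries_Qk.
        rewrite nth_indep with (d' := resp x 0) by (rewrite length_map, queries_length; lia).
        apply map_nth. }
      unfold BB. rewrite Hl. rewrite nth_skipn, Hq, queries_form, Qform_nth2 by lia.
      unfold GG, BB. rewrite Hl. reflexivity. }
    rewrite Hn. unfold step, resp. destruct (Rle_dec _ x); simpl; unfold midp in *; lra.
Qed.
Lemma accuracy eps x y : / (Lr L * 2 ^ m) <= eps -> 0 <= x < 1 -> Rabs (xhat SS x y - x) <= eps / 2.
Proof.
  intros He Hx. unfold xhat. change (est SS) with (estf L m). unfold estf.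
  rewrite lucky_hist, blk_hist by lia.
  change (negb (Nat.eqb (C1 L x) (C2 L m x))) with (isl L m x).
  pose proof (Lr_pos L HL) as Hlr. pose proof (w_pos m) as Hw. pose proof (w_lt1 m Hm) as Hw1.
  assert (H2m : 0 < 2 ^ m) by (apply pow_lt; lra).
  assert (Hwl : w m / Lr L = / (Lr L * 2 ^ m)) by (unfold w; field; lra).
  destruct (block L m HL Hm x Hx) as [B1 [B2 [B3 B4]]].
  destruct (isl L m x) eqn:Hl.
  - unfold isl in Hl. apply Bool.negb_true_iff in Hl.
    assert (Hx2 : x < p2 L m (C1 L x - 1)).
    { destruct (Rlt_le_dec x (p2 L m (C1 L x - 1))) as [|Hle]; auto.
      apply (lucky_char L m HL Hm x Hx) in Hle. congruence. }
    unfold p1, p2 in *. set (A := INR (C1 L x - 1)) in *.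
    assert (E1 : (A + w m / 2) / Lr L - (A + w m) / Lr L = - (w m / Lr L) / 2) by (field; lra).
    assert (E2 : (A + w m / 2) / Lr L - A / Lr L = (w m / Lr L) / 2) by (field; lra).
    apply Rabs_le. lra.
  - assert (HB : skipn (2 * L) (hist SS x y (2 * L + m)) = firstn m (BB L m HL Hm x y)).
    { rewrite firstn_all2 by (rewrite BB_length; lia). unfold BB. rewrite Hl. reflexivity. }
    rewrite HB.
    pose proof (real_inv x y Hx Hl m (Nat.le_refl m)) as Hr.
    destruct (gap_props L m HL Hm (C1 L x - 1) B1) as [G1 [G2 [G3 G4]]].
    destruct (bis_props (gapI L m (C1 L x - 1)) (firstn m (BB L m HL Hm x y)) G2) as [K1 [K2 [K3 K4]]].
    rewrite length_firstn, BB_length, Nat.min_id, G4 in K4.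
    assert (Hwd : (1 - w m) / Lr L / 2 ^ m <= eps).
    { apply Rle_trans with (/ (Lr L * 2 ^ m)); auto.
      assert (E : / (Lr L * 2 ^ m) - (1 - w m) / Lr L / 2 ^ m = w m / (Lr L * 2 ^ m)) by (field; lra).
      assert (0 < w m / (Lr L * 2 ^ m)).
      { apply Rdiv_lt_0_compat; [lra|]. apply Rmult_lt_0_compat; lra. }
      lra. }
    unfold midp. apply Rabs_le. lra.
Qed.
End Props3.

Lemma INR_ne_w a b w : 0 < w < 1 -> INR a <> INR b + w.
Proof.
  intros Hw E. destruct (Nat.le_gt_cases a b) as [H|H].
  - apply le_INR in H. lra.
  - assert (INR (S b) <= INR a) by (apply le_INR; lia). rewrite S_INR in H0. lra.
Qed.

Lemma INR_between a g w : 0 < w < 1 -> ~ (INR g + w < INR a < INR g + 1).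
Proof.
  intros Hw [H1 H2]. destruct (Nat.le_gt_cases a g) as [H|H].
  - apply le_INR in H. lra.
  - assert (INR (S g) <= INR a) by (apply le_INR; lia). rewrite S_INR in H0. lra.
Qed.

Lemma INR_between2 a g w : 0 < w < 1 -> ~ (INR g + w < INR a + w < INR g + 1).
Proof.
  intros Hw [H1 H2]. destruct (Nat.le_gt_cases a g) as [H|H].
  - apply le_INR in H. lra.
  - assert (INR (S g) <= INR a) by (apply le_INR; lia). rewrite S_INR in H0. lra.
Qed.

Section Props4.
Variables (L m : nat).
Hypothesis HL : (2 <= L)%nat.
Hypothesis Hm : (1 <= m)%nat.
Local Notation SS := (strat L m HL Hm).

Lemma divL_inj a b : a / Lr L = b / Lr L -> a = b.
Proof. pose proof (Lr_pos L HL). intros E. apply (Rmult_eq_compat_r (Lr L)) in E.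
  unfold Rdiv in E. rewrite !Rmult_assoc, Rinv_l, !Rmult_1_r in E by lra. auto. Qed.
Lemma divL_lt_inv a b : a / Lr L < b / Lr L -> a < b.
Proof. pose proof (Lr_pos L HL). intros E. destruct (Rlt_le_dec a b); auto.
  apply (divL_le L HL) in r. lra. Qed.

Lemma ph1_inj j j' : (j < 2 * L)%nat -> (j' < 2 * L)%nat -> ph1 L m j = ph1 L m j' -> j = j'.
Proof.
  intros Hj Hj' E. pose proof (w_pos m). pose proof (w_lt1 m Hm).
  unfold ph1, p1, p2 in E.
  destruct (Nat.ltb_spec j L); destruct (Nat.ltb_spec j' L); apply divL_inj in E.
  - apply INR_eq in E. auto.
  - exfalso. exact (INR_ne_w _ _ (w m) ltac:(lra) E).
  - exfalso. symmetry in E. exact (INR_ne_w _ _ (w m) ltac:(lra) E).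
  - assert (Hq : INR (j - L) = INR (j' - L)) by lra. apply INR_eq in Hq. lia.
Qed.

Lemma ph1_not_in_gap j G : (G < L)%nat ->
  ~ (fst (gapI L m G) < ph1 L m j < snd (gapI L m G)).
Proof.
  intros HG [H1 H2]. pose proof (w_pos m). pose proof (w_lt1 m Hm).
  unfold gapI, ph1, p1, p2 in *. cbn [fst snd] in *. rewrite S_INR in H2.
  destruct (Nat.ltb_spec j L).
  - apply divL_lt_inv in H1, H2. exact (INR_between j G (w m) ltac:(lra) (conj H1 H2)).
  - apply divL_lt_inv in H1, H2. exact (INR_between2 (j - L) G (w m) ltac:(lra) (conj H1 H2)).
Qed.

Lemma firstn_split_le {A} (l : list A) i i' : (i <= i')%nat ->
  firstn i' l = firstn i l ++ skipn i (firstn i' l).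
Proof.
  intros H. rewrite <- (firstn_skipn i (firstn i' l)) at 1. rewrite firstn_firstn.
  f_equal. f_equal. lia.
Qed.

Lemma mid_distinct G Bits i i' : (G < L)%nat -> length Bits = m -> (i < i')%nat -> (i' < m)%nat ->
  midp (bis (gapI L m G) (firstn i Bits)) <> midp (bis (gapI L m G) (firstn i' Bits)).
Proof.
  intros HG Hlen Hii Hi' E.
  destruct (gap_props L m HL Hm G HG) as [_ [G2 _]].
  set (I0 := bis (gapI L m G) (firstn i Bits)).
  destruct (bis_props (gapI L m G) (firstn i Bits) G2) as [_ [K2 _]]. fold I0 in K2.
  set (b := nth i Bits false).
  assert (HI1 : bis (gapI L m G) (firstn (S i) Bits) = step I0 b).
  { rewrite (firstn_S_nth _ i false) by lia. apply bis_snoc. }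
  assert (HS : fst (step I0 b) < snd (step I0 b)) by (unfold step, midp; destruct b; simpl; lra).
  rewrite (firstn_split_le Bits (S i) i') in E by lia.
  unfold bis at 2 in E. rewrite fold_left_app in E. fold (bis (gapI L m G) (firstn (S i) Bits)) in E.
  rewrite HI1 in E. fold (bis (step I0 b) (skipn (S i) (firstn i' Bits))) in E.
  set (X := bis (step I0 b) (skipn (S i) (firstn i' Bits))) in *.
  destruct (bis_props (step I0 b) (skipn (S i) (firstn i' Bits)) HS) as [M1 [M2 [M3 _]]].
  fold X in M1, M2, M3.
  pose proof (midp_in _ M2).
  assert (Hend : midp I0 = fst (step I0 b) \/ midp I0 = snd (step I0 b)).
  { unfold step. destruct b; [left|right]; reflexivity. }
  fold I0 in E. clearbody X. lra.
Qed.

Lemma Qform_NoDup G Bits : (G < L)%nat -> length Bits = m -> NoDup (Qform L m G Bits).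
Proof.
  intros HG Hlen. unfold Qform. apply NoDup_app.
  - apply NoDup_map_NoDup_ForallPairs; [|apply seq_NoDup].
    intros a b Ha Hb. apply in_seq in Ha, Hb. apply ph1_inj; lia.
  - apply NoDup_map_NoDup_ForallPairs; [|apply seq_NoDup].
    intros a b Ha Hb E. apply in_seq in Ha, Hb.
    destruct (Nat.lt_total a b) as [H|[H|H]]; auto; exfalso.
    + exact (mid_distinct G Bits a b HG Hlen H ltac:(lia) E).
    + exact (mid_distinct G Bits b a HG Hlen H ltac:(lia) (eq_sym E)).
  - intros q Hq1 Hq2. apply in_map_iff in Hq1, Hq2.
    destruct Hq1 as [j [<- _]]. destruct Hq2 as [i [Ei _]].
    destruct (gap_props L m HL Hm G HG) as [_ [G2 _]].
    destruct (bis_props (gapI L m G) (firstn i Bits) G2) as [K1 [K2 [K3 _]]].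
    pose proof (midp_in _ K2). apply (ph1_not_in_gap j G HG). rewrite <- Ei. lra.
Qed.
End Props4.

Lemma encode (Bits : list bool) : exists n, (n < 2 ^ length Bits)%nat /\
  map (Nat.testbit n) (seq 0 (length Bits)) = Bits.
Proof.
  induction Bits as [|b Bits IH].
  - exists 0%nat. simpl. split; [lia|reflexivity].
  - destruct IH as [n [Hn E]].
    exists (2 * n + (if b then 1 else 0))%nat. simpl length. split.
    + rewrite Nat.pow_succ_r'. destruct b; lia.
    + change (seq 0 (S (length Bits))) with (0%nat :: seq 1 (length Bits)).
      rewrite <- seq_shift. cbn [map]. rewrite map_map. f_equal.
      * destruct b; [apply Nat.testbit_odd_0|rewrite Nat.add_0_r; apply Nat.testbit_even_0].
      * rewrite <- E at 2. apply map_ext. intros k. destruct b.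
        -- apply Nat.testbit_odd_succ. lia.
        -- rewrite Nat.add_0_r. apply Nat.testbit_even_succ. lia.
Qed.

Lemma coverable_K (E : R -> Prop) d K : 0 <= d ->
  (forall x, E x -> 0 <= x < INR K * d) -> coverable E d K.
Proof.
  intros Hd. revert E. induction K; intros E H.
  - apply coverable_zero. intros x Ex. specialize (H x Ex). simpl in H. lra.
  - replace (S K) with (K + 1)%nat by lia.
    apply coverable_sub with (fun x => (E x /\ x < INR K * d) \/ (INR K * d <= x <= INR K * d + d)).
    { intros x Ex. destruct (Rlt_le_dec x (INR K * d)); [left; auto|right].
      specialize (H x Ex). rewrite S_INR in H. lra. }
    apply coverable_union.
    + apply IHK. intros x [Ex Hx]. specialize (H x Ex). lra.
    + apply coverable_one with (INR K * d) (INR K * d + d); try lra. auto.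
Qed.

Lemma coverable_exists (E : R -> Prop) d : 0 < d -> (forall x, E x -> 0 <= x < 1) ->
  exists n, coverable E d n.
Proof.
  intros Hd H. destruct (archimed (/ d)) as [A1 _].
  assert (Hp : (0 <= up (/ d))%Z).
  { apply le_IZR. pose proof (Rinv_0_lt_compat d Hd). simpl. lra. }
  exists (Z.to_nat (up (/ d))). apply coverable_K; [lra|].
  intros x Ex. specialize (H x Ex).
  rewrite INR_IZR_INZ, Z2Nat.id by auto.
  assert (1 < IZR (up (/ d)) * d).
  { apply Rmult_lt_compat_r with (r := d) in A1; auto. rewrite Rinv_l in A1 by lra. lra. }
  lra.
Qed.

Section Priv.
Variables (L m : nat).
Hypothesis HL : (2 <= L)%nat.
Hypothesis Hm : (1 <= m)%nat.
Local Notation SS := (strat L m HL Hm).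

Definition zz (j : nat) : R := (INR j + INR j * (w m / Lr L)) / Lr L.

Lemma zz_props j : (j < L)%nat -> p1 L j <= zz j < p2 L m j.
Proof.
  intros Hj. pose proof (Lr_pos L HL). pose proof (w_pos m). pose proof (w_lt1 m Hm).
  assert (HjL : INR j < Lr L) by (apply lt_INR; auto). pose proof (pos_INR j).
  unfold zz, p1, p2. split; [apply (divL_le L HL)|apply (divL_lt L HL)].
  - assert (0 <= INR j * (w m / Lr L)); [|lra].
    apply Rmult_le_pos; [lra|]. left. apply Rdiv_lt_0_compat; lra.
  - assert (INR j * (w m / Lr L) < w m); [|lra].
    replace (INR j * (w m / Lr L)) with (w m * (INR j / Lr L)) by (field; lra).
    assert (INR j / Lr L < 1) by (apply (divL_lt1 L HL); auto).
    assert (0 <= INR j / Lr L) by (apply (divL_nonneg L HL); auto). nra.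
Qed.

Lemma p2_le_p1S j : p2 L m j <= p1 L (S j).
Proof. unfold p1, p2. apply (divL_le L HL). rewrite S_INR. pose proof (w_lt1 m Hm). lra. Qed.

Lemma zz_range j : (j < L)%nat -> 0 <= zz j < 1.
Proof.
  intros Hj. destruct (zz_props j Hj). pose proof (p1_range L m HL Hm j Hj).
  pose proof (p2_range L m HL Hm j Hj). lra.
Qed.

Lemma zz_C1 j : (j < L)%nat -> (C1 L (zz j) - 1)%nat = j.
Proof.
  intros Hj. destruct (block L m HL Hm (zz j) (zz_range j Hj)) as [B1 [B2 [B3 B4]]].
  destruct (zz_props j Hj) as [Z1 Z2]. pose proof (p2_le_p1S j).
  set (b := (C1 L (zz j) - 1)%nat) in *.
  destruct (Nat.lt_total b j) as [Hb|[Hb|Hb]]; auto; exfalso.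
  - pose proof (p1_mono L HL (S b) j Hb). lra.
  - pose proof (p1_mono L HL (S j) b Hb). lra.
Qed.

Lemma zz_isl j : (j < L)%nat -> isl L m (zz j) = true.
Proof.
  intros Hj. unfold isl. apply Bool.negb_true_iff.
  destruct (Nat.eqb (C1 L (zz j)) (C2 L m (zz j))) eqn:E; auto.
  apply (lucky_char L m HL Hm (zz j) (zz_range j Hj)) in E. rewrite zz_C1 in E by auto.
  destruct (zz_props j Hj). lra.
Qed.

Lemma seed_decode G n k : (G < L)%nat -> fg L (S (G + n * L)) = G /\ fb L (S (G + n * L)) k = map (Nat.testbit n) (seq 0 k).
Proof.
  intros HG. unfold fg, fb. replace (S (G + n * L) - 1)%nat with (G + n * L)%nat by lia.
  split.
  - rewrite Nat.Div0.mod_add. apply Nat.mod_small. auto.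
  - rewrite Nat.div_add by lia. rewrite Nat.div_small by auto. reflexivity.
Qed.

Lemma zz_info x y j : 0 <= x < 1 -> (j < L)%nat -> info_set SS (queries SS x y) (zz j).
Proof.
  intros Hx Hj. split; [apply zz_range; auto|].
  destruct (encode (BB L m HL Hm x y)) as [n [Hn En]]. rewrite BB_length in Hn, En.
  set (G := GG L m x y). assert (HG : (G < L)%nat) by (apply GG_lt; auto).
  destruct (seed_decode G n m HG) as [D1 D2].
  apply seed_prob_pos with (S (G + n * L)).
  - simpl nseeds. split; [lia|]. assert (n <= 2 ^ m - 1)%nat by lia.
    assert (G + n * L <= L - 1 + (2 ^ m - 1) * L)%nat by nia.
    assert (1 <= 2 ^ m)%nat by (apply Nat.neq_0_lt_0; apply Nat.pow_nonzero; lia). nia.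
  - rewrite !queries_form. unfold GG at 1, BB at 1. rewrite zz_isl by auto.
    rewrite D1, D2, En. reflexivity.
Qed.

Lemma zz_sep delta j j' : delta <= 1 / Lr L -> j <> j' -> Rabs (zz j - zz j') > delta.
Proof.
  intros Hd Hne. pose proof (Lr_pos L HL). pose proof (w_pos m).
  assert (E : zz j - zz j' = (INR j - INR j') * ((1 + w m / Lr L) / Lr L)) by (unfold zz; field; lra).
  rewrite E, Rabs_mult.
  assert (H1 : 1 <= Rabs (INR j - INR j')).
  { destruct (proj1 (Nat.lt_gt_cases j j') Hne) as [Hl|Hl].
    - assert (Hs : INR (S j) <= INR j') by (apply le_INR; lia). rewrite S_INR in Hs.
      rewrite Rabs_left by lra. lra.
    - assert (Hs : INR (S j') <= INR j) by (apply le_INR; lia). rewrite S_INR in Hs.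
      rewrite Rabs_right by lra. lra. }
  assert (H2 : 1 / Lr L < (1 + w m / Lr L) / Lr L).
  { apply (divL_lt L HL). assert (0 < w m / Lr L) by (apply Rdiv_lt_0_compat; lra). lra. }
  assert (0 < 1 / Lr L) by (apply Rdiv_lt_0_compat; lra).
  rewrite (Rabs_right ((1 + w m / Lr L) / Lr L)) by lra.
  assert (Rabs (INR j - INR j') * ((1 + w m / Lr L) / Lr L) >= 1 * ((1 + w m / Lr L) / Lr L)) by (apply Rmult_ge_compat_r; lra).
  lra.
Qed.

End Priv.

Lemma strat_private L m (HL : (2 <= L)%nat) (Hm : (1 <= m)%nat) eps delta :
  / (Lr L * 2 ^ m) <= eps -> 0 < delta -> delta <= 1 / Lr L ->
  is_private (strat L m HL Hm) eps delta L.
Proof.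
  intros He Hd HdL. split; [|split].
  - intros x y Hx Hy. rewrite queries_form. apply Qform_NoDup; auto.
    + apply GG_lt; auto.
    + apply BB_length.
  - intros x Hx. apply seed_prob_one. intros y _. apply accuracy; auto.
  - intros x qs Hx HQ. destruct (seed_prob_pos_inv _ _ HQ) as [y [Hy Hqs]].
    destruct (coverable_exists (info_set (strat L m HL Hm) qs) delta Hd (fun x' H => proj1 H)) as [n Hn].
    destruct (cover_number_spec _ _ _ Hn) as [Hc _].
    apply (coverable_points (info_set (strat L m HL Hm) qs) delta _ (zz L m) L); [| |exact Hc].
    + intros j Hj. rewrite <- Hqs. apply zz_info; auto.
    + intros j j' _ _ Hne. apply zz_sep; auto.
Qed.

Lemma Rceil_ge v : v <= IZR (Rceil v).
Proof.
  unfold Rceil. destruct (archimed (- v)) as [A1 A2].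
  rewrite opp_IZR, minus_IZR. lra.
Qed.

Lemma Rceil_le v z : v <= IZR z -> (Rceil v <= z)%Z.
Proof.
  intros H. unfold Rceil. destruct (archimed (- v)) as [A1 A2].
  assert (IZR (- z) < IZR (up (- v))) by (rewrite opp_IZR; lra).
  apply lt_IZR in H0. lia.
Qed.

Lemma ln2_pos : 0 < ln 2.
Proof. rewrite <- ln_1. apply ln_increasing; lra. Qed.

Lemma log2_le a n : 0 < a -> a <= 2 ^ n -> log2 a <= INR n.
Proof.
  intros Ha H. unfold log2. pose proof ln2_pos.
  assert (ln a <= INR n * ln 2).
  { rewrite <- ln_pow by lra. destruct H as [H|H]; [left; apply ln_increasing; auto|rewrite H; lra]. }
  apply (Rmult_le_reg_r (ln 2)); auto. unfold Rdiv. rewrite Rmult_assoc, Rinv_l by lra. lra.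
Qed.

Lemma ceil_log2_le a n : 0 < a -> a <= 2 ^ n -> IZR (Rceil (log2 a)) <= INR n.
Proof.
  intros Ha H. rewrite INR_IZR_INZ. apply IZR_le. apply Rceil_le. rewrite <- INR_IZR_INZ.
  apply log2_le; auto.
Qed.

Lemma pow_ge_of_log2 a v : 0 < a -> v = log2 a -> forall n, v <= INR n -> a <= 2 ^ n.
Proof.
  intros Ha Hv n Hn. rewrite <- Rpower_pow by lra.
  unfold Rpower. pose proof ln2_pos.
  rewrite <- (exp_ln a) at 1 by auto.
  assert (ln a <= INR n * ln 2).
  { rewrite Hv in Hn. unfold log2 in Hn.
    apply (Rmult_le_compat_r (ln 2)) in Hn; [|lra]. unfold Rdiv in Hn.
    rewrite Rmult_assoc, Rinv_l, Rmult_1_r in Hn by lra. auto. }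
  destruct H0 as [H0|H0]; [left; apply exp_increasing; auto|rewrite H0; lra].
Qed.

Lemma Nstar_spec eps delta L N0 : (exists s : strategy N0, is_private s eps delta L) ->
  (exists s : strategy (Nstar eps delta L), is_private s eps delta L) /\ (Nstar eps delta L <= N0)%nat.
Proof.
  intros H. unfold Nstar.
  assert (Hs := epsilon_spec (inhabits 0%nat)
    (fun N => (exists s : strategy N, is_private s eps delta L) /\
              forall N', (exists s : strategy N', is_private s eps delta L) -> (N <= N')%nat)
    (least_exists _ (ex_intro _ N0 H))).
  destruct Hs as [H1 H2]. split; auto.
Qed.

Theorem theorem1 (eps delta : R) (L : nat) :
  0 < eps -> 0 < delta -> (2 <= L)%nat ->
  2 * eps < delta -> delta <= 1 / INR L ->
  Rmax (IZR (Rceil (log2 (1 / eps))))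
       (IZR (Rceil (log2 (delta / eps))) + 2 * INR L - 4)
    <= INR (Nstar eps delta L)
  /\ INR (Nstar eps delta L)
    <= IZR (Rceil (log2 (1 / (INR L * eps)))) + 2 * INR L.
Proof.
  intros He Hd HL Hed HdL.
  assert (HLr : 2 <= INR L) by (replace 2 with (INR 2) by (simpl; lra); apply le_INR; auto).
  assert (Hd1 : delta <= 1 / 2).
  { apply Rle_trans with (1 / INR L); auto. unfold Rdiv. rewrite !Rmult_1_l.
    apply Rinv_le_contravar; lra. }
  set (a := 1 / (INR L * eps)).
  assert (Ha : 2 < a).
  { unfold a. assert (INR L * eps < 1 / 2).
    { assert (INR L * delta <= 1).
      { apply (Rmult_le_compat_l (INR L)) in HdL; [|lra].
        replace (INR L * (1 / INR L)) with 1 in HdL by (field; lra). auto. }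
      nra. }
    assert (0 < INR L * eps) by nra.
    apply (Rmult_lt_reg_r (INR L * eps)); auto. unfold Rdiv. rewrite Rmult_assoc, Rinv_l by lra. lra. }
  set (v := log2 a). set (mZ := Rceil v).
  assert (Hv : 1 < v).
  { unfold v, log2. pose proof ln2_pos. apply (Rmult_lt_reg_r (ln 2)); auto.
    unfold Rdiv. rewrite Rmult_assoc, Rinv_l by lra. rewrite Rmult_1_l, Rmult_1_r.
    apply ln_increasing; lra. }
  assert (HmZ : (2 <= mZ)%Z).
  { pose proof (Rceil_ge v). fold mZ in H. assert (IZR 1 < IZR mZ) by (simpl; lra).
    apply lt_IZR in H0. lia. }
  set (m := Z.to_nat mZ).
  assert (Hm : (1 <= m)%nat) by (unfold m; lia).
  assert (Hmr : INR m = IZR mZ) by (unfold m; rewrite INR_IZR_INZ, Z2Nat.id by lia; reflexivity).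
  assert (H2m : a <= 2 ^ m).
  { apply (pow_ge_of_log2 a v); [lra|reflexivity|]. rewrite Hmr. apply Rceil_ge. }
  assert (Heps : / (Lr L * 2 ^ m) <= eps).
  { unfold Lr. unfold a in H2m. assert (0 < INR L * eps) by nra.
    assert (0 < 2 ^ m) by (apply pow_lt; lra).
    rewrite Rinv_mult. apply (Rmult_le_reg_l (INR L * 2 ^ m)); [nra|].
    replace (INR L * 2 ^ m * (/ INR L * / 2 ^ m)) with 1 by (field; lra).
    apply (Rmult_le_compat_r (INR L * eps)) in H2m; [|lra].
    unfold Rdiv in H2m. rewrite Rmult_1_l, Rinv_l in H2m by lra. nra. }
  assert (Hpriv := strat_private L m HL Hm eps delta Heps Hd HdL).
  destruct (Nstar_spec eps delta L (2 * L + m) (ex_intro (fun s => is_private s eps delta L) _ Hpriv)) as [[s Hs] Hle].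
  set (N := Nstar eps delta L) in *.
  destruct (lower_bounds s eps delta L He Hed ltac:(lra) Hs) as [Lb1 [Lb2 Lb3]].
  split.
  - apply Rmax_lub.
    + apply ceil_log2_le; [apply Rdiv_lt_0_compat; lra|].
      apply (Rmult_le_reg_r eps); auto. unfold Rdiv. rewrite Rmult_assoc, Rinv_l by lra. lra.
    + assert (Hc : IZR (Rceil (log2 (delta / eps))) <= INR (N - (2 * L - 4))).
      { apply ceil_log2_le; [apply Rdiv_lt_0_compat; lra|].
        apply (Rmult_le_reg_r eps); auto. unfold Rdiv. rewrite Rmult_assoc, Rinv_l by lra. lra. }
      rewrite minus_INR in Hc by auto. rewrite minus_INR in Hc by lia. rewrite mult_INR in Hc.
      simpl (INR 2) in Hc. simpl (INR 4) in Hc. lra.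
  - apply le_INR in Hle. rewrite plus_INR, mult_INR in Hle. fold v. fold mZ. rewrite <- Hmr.
    simpl (INR 2) in Hle. lra.
Qed.
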